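(* Let $p$ be an odd prime and $a,s$ natural numbers with $a<p$. For every set partition $\delta$ of $\{1,\ldots,as\}$ into $s$ sets of size $a$, there are exactly $p^{(a-1)s}$ distinct set partitions of $\{1,\ldots,asp\}$ into $sp$ sets of size $a$ which are fixed by $R_{as}$ and have type $\delta$.
   Context: For $j\geq 1$ let $z_j=(p(j-1)+1,\ldots,pj)$ and $\mathcal{O}_j=\{p(j-1)+1,\ldots,pj\}$. Let $\sigma=z_1\cdots z_{as}\in S_{asp}$ (right actions) and $R_{as}=\langle\sigma\rangle$. Given a set partition $\delta=\{\delta_1,\ldots,\delta_s\}$ of $\{1,\ldots,as\}$ into sets of size $a$, a set partition $\omega$ of $\{1,\ldots,asp\}$ into $sp$ sets of size $a$ has type $\delta$ if there are sets $A_1,\ldots,A_s$ of size $a$ with $|A_i\cap\mathcal{O}_j|=1$ if $j\in\delta_i$ and $|A_i\cap\mathcal{O}_j|=0$ if $j\notin\delta_i$, such that $\omega=\{A_i\sigma^k : 1\leq i\leq s,\ 0\leq k\leq p-1\}$. Every set partition fixed by $R_{as}$ has a unique type. *)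

(* Defs.v *)
(* Points {1..asp} are encoded 0-indexed as 'I_(a*s*p):
   the point x (0-based) corresponds to x+1. *)
From mathcomp Require Import all_boot.
Set Implicit Arguments. Unset Strict Implicit. Unset Printing Implicit Defensive.

Definition orbitO (p a s : nat) (j : 'I_(a*s)) : {set 'I_(a*s*p)} :=
  [set x : 'I_(a*s*p) | x %/ p == j].

(* sigma = z_1 ... z_{as}: the p-cycle on each block O_j, x |-> next element
   of its block cyclically. *)
Definition sigma (p a s : nat) (x : 'I_(a*s*p)) : 'I_(a*s*p) :=
  insubd x (p * (x %/ p) + (x %% p).+1 %% p).

Definition is_set_partition (T : finType) (k a : nat) (w : {set {set T}}) : bool :=
  [&& partition w [set: T], #|w| == k & [forall B in w, #|B| == a]].

(* omega is fixed by R_{as} = <sigma> = {sigma^k : k < p}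
   (sets acted upon pointwise). *)
Definition fixed_by_R (p a s : nat) (w : {set {set 'I_(a*s*p)}}) : bool :=
  [forall k : 'I_p, [set [set iter k (@sigma p a s) x | x in B] | B : {set 'I_(a*s*p)} in w] == w].

Definition has_type (p a s : nat) (delta : {set {set 'I_(a*s)}})
    (w : {set {set 'I_(a*s*p)}}) : bool :=
  [exists A : {ffun {set 'I_(a*s)} -> {set 'I_(a*s*p)}},
     [forall d in delta,
        (#|A d| == a) &&
        [forall j : 'I_(a*s), #|A d :&: @orbitO p a s j| == (j \in d)]]
     && (w == [set [set iter k (@sigma p a s) x | x in A d] | d : {set 'I_(a*s)} in delta, k : 'I_p in [set: 'I_p]])].

(* Main.v *)
Require Import Defs.
From mathcomp Require Import all_boot zify.
Set Implicit Arguments. Unset Strict Implicit. Unset Printing Implicit Defensive.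

Section S.
Variables (p a s : nat).
Hypothesis p_gt0 : 0 < p.
Local Notation n := (a*s).
Local Notation N := (a*s*p).

Lemma pt_lt (j : 'I_n) (r : 'I_p) : j * p + r < N.
Proof. have := ltn_ord j; have := ltn_ord r. nia. Qed.
Definition pt j r : 'I_N := Ordinal (pt_lt j r).
Lemma blk_lt (x : 'I_N) : x %/ p < n.
Proof. by rewrite ltn_divLR. Qed.
Definition blk x : 'I_n := Ordinal (blk_lt x).
Definition off (x : 'I_N) : 'I_p := Ordinal (ltn_pmod x p_gt0).
Definition addo (k : nat) (r : 'I_p) : 'I_p := Ordinal (ltn_pmod (r + k) p_gt0).
Definition subo (o c : 'I_p) : 'I_p := Ordinal (ltn_pmod (o + (p - c)) p_gt0).
Definition z0 : 'I_p := Ordinal p_gt0.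

Lemma blk_pt j r : blk (pt j r) = j.
Proof. apply: val_inj => /=. by rewrite divnMDl // divn_small // addn0. Qed.
Lemma off_pt j r : off (pt j r) = r.
Proof. apply: val_inj => /=. by rewrite modnMDl modn_small. Qed.
Lemma pt_blk_off x : pt (blk x) (off x) = x.
Proof. apply: val_inj => /=. by rewrite -divn_eq. Qed.
Lemma pt_inj j1 r1 j2 r2 : pt j1 r1 = pt j2 r2 -> j1 = j2 /\ r1 = r2.
Proof. by move=> E; split; [rewrite -(blk_pt j1 r1) E blk_pt | rewrite -(off_pt j1 r1) E off_pt]. Qed.

Lemma sigmaE x : @sigma p a s x = pt (blk x) (addo 1 (off x)).
Proof.
apply: val_inj; rewrite /sigma val_insubd /= mulnC.
have /= H := pt_lt (blk x) (addo 1 (off x)). rewrite addn1 in H. by rewrite ifT // addn1.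
Qed.

Lemma addoS k r : addo 1 (addo k r) = addo k.+1 r.
Proof. apply: val_inj => /=. by rewrite modnDml -addnA addn1. Qed.

Lemma iterE k x : iter k (@sigma p a s) x = pt (blk x) (addo k (off x)).
Proof.
elim: k => [|k IH] /=.
  rewrite -{1}(pt_blk_off x); congr pt; apply: val_inj => /=. by rewrite addn0 modn_mod.
by rewrite IH sigmaE blk_pt off_pt addoS.
Qed.

Lemma addo_injk (k1 k2 : 'I_p) r : addo k1 r = addo k2 r -> k1 = k2.
Proof.
move/(congr1 val) => /= /eqP. rewrite eqn_modDl !modn_small // => /eqP E. exact: val_inj.
Qed.
Lemma addo_injr k (r1 r2 : 'I_p) : addo k r1 = addo k r2 -> r1 = r2.
Proof.
move/(congr1 val) => /= /eqP. rewrite eqn_modDr !modn_small // => /eqP E. exact: val_inj.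
Qed.
Lemma addo_subo (o c : 'I_p) : addo (subo o c) c = o.
Proof.
apply: val_inj => /=. rewrite modnDmr.
have -> : c + (o + (p - c)) = o + p by have := ltn_ord c; lia.
by rewrite modnDr modn_small.
Qed.
Lemma addo0 (r : 'I_p) : addo z0 r = r.
Proof. apply: val_inj => /=. by rewrite addn0 modn_small. Qed.
Lemma addoA (m k : 'I_p) r : addo m (addo k r) = addo (addo m k) r.
Proof. apply: val_inj => /=. by rewrite modnDml modnDmr addnA. Qed.
Lemma suboo (c : 'I_p) : subo c c = z0.
Proof. apply: val_inj => /=. have -> : c + (p - c) = p by have := ltn_ord c; lia. by rewrite modnn. Qed.


Definition Aset (c : {ffun 'I_n -> 'I_p}) (d : {set 'I_n}) : {set 'I_N} :=
  [set x | (blk x \in d) && (off x == c (blk x))].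
Definition addf (k : nat) (c : {ffun 'I_n -> 'I_p}) : {ffun 'I_n -> 'I_p} :=
  [ffun j => addo k (c j)].

Lemma memA c d x : (x \in Aset c d) = (blk x \in d) && (off x == c (blk x)).
Proof. by rewrite inE. Qed.
Lemma memApt c d j r : (pt j r \in Aset c d) = (j \in d) && (r == c j).
Proof. by rewrite memA blk_pt off_pt. Qed.

Lemma iter_image k c d : [set iter k (@sigma p a s) x | x in Aset c d] = Aset (addf k c) d.
Proof.
apply/setP => y; apply/imsetP/idP.
  move=> [x]; rewrite memA => /andP[xd /eqP xo] ->.
  by rewrite iterE memApt xd ffunE xo eqxx.
rewrite memA ffunE => /andP[yd /eqP yo].
exists (pt (blk y) (c (blk y))); first by rewrite memApt yd eqxx.
by rewrite iterE blk_pt off_pt -yo pt_blk_off.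
Qed.

Lemma Aset_eq_on (c1 c2 : {ffun 'I_n -> 'I_p}) (d : {set 'I_n}) : {in d, c1 =1 c2} -> Aset c1 d = Aset c2 d.
Proof.
move=> H; apply/setP => x; rewrite !memA.
by case xd: (blk x \in d) => //=; rewrite H.
Qed.

Lemma card_Aset c d : #|Aset c d| = #|d|.
Proof.
have -> : Aset c d = [set pt j (c j) | j in d].
  apply/setP => x; apply/idP/imsetP.
    rewrite memA => /andP[xd /eqP xo]. exists (blk x) => //. by rewrite -xo pt_blk_off.
  by move=> [j jd ->]; rewrite memApt jd eqxx.
apply: card_imset => j1 j2 /pt_inj []. done.
Qed.

Lemma card_AsetI c d j : #|Aset c d :&: @orbitO p a s j| = (j \in d).
Proof.
have E : Aset c d :&: @orbitO p a s j = if j \in d then [set pt j (c j)] else set0.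
  apply/setP => x; rewrite inE memA /orbitO inE.
  have -> : (x %/ p == j) = (blk x == j) by [].
  case: (eqVneq (blk x) j) => [<-|ne]; last first.
    rewrite andbF; case: ifP => _; rewrite ?inE //.
    apply/esym/negbTE/eqP => E; move: ne; by rewrite E blk_pt eqxx.
  rewrite andbT; case: ifP => bd; rewrite ?inE ?bd //.
  apply/idP/eqP.
    by move/eqP => <-; rewrite pt_blk_off.
  move=> E; by rewrite E blk_pt off_pt eqxx.
by rewrite E; case: (j \in d); rewrite ?cards1 ?cards0.
Qed.

Variable delta : {set {set 'I_n}}.
Hypothesis a_gt0 : 0 < a.
Hypothesis Hd : is_set_partition s a delta.

Lemma delta_part : partition delta [set: 'I_n].
Proof. by case/and3P: Hd. Qed.
Lemma delta_triv : trivIset delta.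
Proof. by case/and3P: delta_part. Qed.
Lemma delta_card d : d \in delta -> #|d| = a.
Proof. case/and3P: Hd => _ _ /forall_inP H dD. by apply/eqP/H. Qed.
Lemma delta_cardD : #|delta| = s.
Proof. by case/and3P: Hd => _ /eqP. Qed.
Lemma pblockD j : pblock delta j \in delta.
Proof. apply: pblock_mem. case/and3P: delta_part => /eqP -> _ _. by rewrite inE. Qed.
Lemma mem_pblockD j : j \in pblock delta j.
Proof. rewrite mem_pblock. case/and3P: delta_part => /eqP -> _ _. by rewrite inE. Qed.
Lemma same_block d e j : d \in delta -> e \in delta -> j \in d -> j \in e -> d = e.
Proof.
move=> dD eD jd je. by rewrite -(def_pblock delta_triv dD jd) (def_pblock delta_triv eD je).
Qed.
Lemma delta_nonempty d : d \in delta -> exists j, j \in d.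
Proof.
move=> dD. have : 0 < #|d| by rewrite delta_card.
by case/card_gt0P => j jd; exists j.
Qed.

Lemma Aset_inj c1 c2 d e j : d \in delta -> e \in delta -> j \in d ->
  Aset c1 d = Aset c2 e -> e = d /\ c1 j = c2 j.
Proof.
move=> dD eD jd E.
have : pt j (c1 j) \in Aset c2 e by rewrite -E memApt jd eqxx.
rewrite memApt => /andP[je /eqP ->]; split => //.
exact: (same_block eD dD je jd).
Qed.


Definition W (c : {ffun 'I_n -> 'I_p}) : {set {set 'I_N}} :=
  [set [set iter k (@sigma p a s) x | x in Aset c d] | d : {set 'I_n} in delta, k : 'I_p in [set: 'I_p]].
Definition W' (c : {ffun 'I_n -> 'I_p}) : {set {set 'I_N}} :=
  [set Aset (addf k c) d | d : {set 'I_n} in delta, k : 'I_p in [set: 'I_p]].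
Lemma WE c : W c = W' c.
Proof. apply: eq_in_imset2 => d k _ _. exact: iter_image. Qed.

Lemma W'_inj c d1 d2 (k1 k2 : 'I_p) : d1 \in delta -> d2 \in delta ->
  Aset (addf k1 c) d1 = Aset (addf k2 c) d2 -> d1 = d2 /\ k1 = k2.
Proof.
move=> d1D d2D E. have [j jd] := delta_nonempty d1D.
have [-> ] := Aset_inj d1D d2D jd E. rewrite !ffunE => /addo_injk. done.
Qed.

Lemma card_W c : #|W' c| = s * p.
Proof.
rewrite /W' curry_imset2X card_in_imset ?cardsX ?cardsT ?card_ord ?delta_cardD //.
move=> [d1 k1] [d2 k2]; rewrite !inE /= => /andP[d1D _] /andP[d2D _] E.
by have [-> ->] := W'_inj d1D d2D E.
Qed.

Lemma part_W c : partition (W' c) [set: 'I_N].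
Proof.
apply/and3P; split.
- apply/eqP/setP => x; rewrite inE; apply/bigcupP.
  exists (Aset (addf (subo (off x) (c (blk x))) c) (pblock delta (blk x))).
    apply/imset2P; exists (pblock delta (blk x)) (subo (off x) (c (blk x))) => //.
    exact: pblockD.
  by rewrite memA mem_pblockD ffunE addo_subo eqxx.
- apply/trivIsetP => B1 B2 /imset2P[d1 k1 d1D _ ->] /imset2P[d2 k2 d2D _ ->] ne.
  rewrite -setI_eq0; apply/eqP/setP => x; rewrite !inE.
  apply/negbTE/negP => /andP[/andP[x1 /eqP o1] /andP[x2 /eqP o2]].
  move: ne; have E := same_block d1D d2D x1 x2; subst d2.
  move: o1 o2; rewrite !ffunE => -> /addo_injk ->. by rewrite eqxx.
- apply/imset2P => [[d k dD _ E]].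
  have [j jd] := delta_nonempty dD.
  have : pt j (addo k (c j)) \in Aset (addf k c) d by rewrite memApt jd ffunE eqxx.
  by rewrite -E inE.
Qed.

Lemma iter_inj m : injective (iter m (@sigma p a s)).
Proof.
move=> x y; rewrite !iterE => /pt_inj [E1 /addo_injr E2].
by rewrite -(pt_blk_off x) E1 E2 pt_blk_off.
Qed.

Lemma fixed_W c : @fixed_by_R p a s (W c).
Proof.
apply/forallP => m; rewrite WE eqEcard; apply/andP; split.
  apply/subsetP => B /imsetP[B' /imset2P[d k dD _ ->] ->].
  rewrite iter_image; apply/imset2P; exists d (addo m k) => //.
  apply: Aset_eq_on => j _; by rewrite !ffunE addoA.
rewrite card_imset //. apply: imset_inj. exact: iter_inj.
Qed.

Lemma type_W c : @has_type p a s delta (W c).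
Proof.
apply/existsP; exists [ffun d => Aset c d]; apply/andP; split.
  apply/forall_inP => d dD; rewrite ffunE card_Aset delta_card // eqxx /=.
  apply/forallP => j; by rewrite card_AsetI.
apply/eqP; apply: eq_in_imset2 => d k _ _; by rewrite ffunE.
Qed.

Lemma good_W c : is_set_partition (s*p) a (W c) && @fixed_by_R p a s (W c) && @has_type p a s delta (W c).
Proof.
rewrite fixed_W type_W !andbT /is_set_partition WE part_W card_W eqxx /=.
apply/forall_inP => B /imset2P[d k dD _ ->]. by rewrite card_Aset delta_card.
Qed.


Lemma type_inv w : @has_type p a s delta w -> exists c, w = W c.
Proof.
case/existsP => A /andP[/forall_inP HA /eqP ->].
pose c := [ffun j => odflt z0 (omap off [pick x in A (pblock delta j) :&: @orbitO p a s j])].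
have key : forall d j, d \in delta -> j \in d ->
    exists y, [/\ A d :&: @orbitO p a s j = [set y], blk y = j & c j = off y].
  move=> d j dD jd. have /andP[_ /forallP /(_ j)] := HA d dD. rewrite jd => /cards1P [y Ey].
  have : y \in A d :&: @orbitO p a s j by rewrite Ey inE.
  rewrite inE => /andP[_]; rewrite inE => /eqP Ey2.
  exists y; split => //; first exact: val_inj.
  rewrite ffunE (def_pblock delta_triv dD jd).
  case: pickP => [z|]; last by move/(_ y); rewrite Ey inE eqxx.
  by rewrite Ey inE => /eqP ->.
exists c; apply: eq_in_imset2 => d k dD _; suff -> : A d = Aset c d by []; apply/setP => x.
rewrite memA; apply/idP/idP.
  move=> xA; have xd : blk x \in d.
    have /andP[_ /forallP /(_ (blk x))] := HA d dD.
    case: (blk x \in d) => //; rewrite eqn0Ngt => /negP; elim; apply/card_gt0P.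
    by exists x; rewrite inE xA /orbitO inE; apply/eqP.
  rewrite xd /=; have [y [Ey _ ->]] := key d (blk x) dD xd.
  suff -> : x = y by [].
  have : x \in A d :&: @orbitO p a s (blk x) by rewrite !inE xA eqxx.
  by rewrite Ey inE => /eqP.
move=> /andP[xd /eqP xo]. have [y [Ey By Cy]] := key d (blk x) dD xd.
have -> : x = y by rewrite -(pt_blk_off x) -(pt_blk_off y) By xo Cy.
have : y \in A d :&: @orbitO p a s (blk x) by rewrite Ey inE.
by rewrite inE => /andP[].
Qed.


Definition rep (j : 'I_n) : 'I_n := odflt j [pick i in pblock delta j].
Lemma rep_spec d : d \in delta -> exists i0, i0 \in d /\ forall j, j \in d -> rep j = i0.
Proof.
move=> dD; have [j0 j0d] := delta_nonempty dD.
have : forall j, j \in d -> rep j = odflt j [pick i in d].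
  by move=> j jd; rewrite /rep (def_pblock delta_triv dD jd).
case: pickP => [i0 i0d E|/(_ j0)]; last by rewrite j0d.
by exists i0.
Qed.


Definition nc (c : {ffun 'I_n -> 'I_p}) : {ffun 'I_n -> 'I_p} :=
  [ffun j => subo (c j) (c (rep j))].

Lemma nc_shift c (k : 'I_p) d i0 : d \in delta -> (forall j, j \in d -> rep j = i0) ->
  Aset (addf k c) d = Aset (addf (addo k (c i0)) (nc c)) d.
Proof.
move=> dD Hr; apply: Aset_eq_on => j jd; rewrite !ffunE Hr //.
apply: val_inj => /=. rewrite modnDml modnDmr.
have -> : c j + (p - c i0) + (c i0 + k) = c j + k + p by have := ltn_ord (c i0); lia.
by rewrite modnDr.
Qed.

Lemma W_nc c : W' c = W' (nc c).
Proof.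
apply/setP => B; apply/imset2P/imset2P => [[d k dD _ ->]|[d k dD _ ->]];
  have [i0 [i0d Hr]] := rep_spec dD.
  by exists d (addo k (c i0)) => //; apply: nc_shift.
exists d (subo k (c i0)) => //. by rewrite (nc_shift c _ dD Hr) addo_subo.
Qed.

Definition Rset : {set 'I_n} := [set j | rep j == j].
Definition Nset : {set {ffun 'I_n -> 'I_p}} := [set c : {ffun 'I_n -> 'I_p} | [forall j in Rset, c j == z0]].

Lemma nc_N c : nc c \in Nset.
Proof.
rewrite inE; apply/forall_inP => j; rewrite inE => /eqP E.
by rewrite ffunE E suboo.
Qed.

Lemma W_injN : {in Nset &, injective W}.
Proof.
move=> c1 c2; rewrite !inE => /forall_inP N1 /forall_inP N2; rewrite !WE => E.
apply/ffunP => j.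
set d := pblock delta j; have dD : d \in delta := pblockD j.
have jd : j \in d := mem_pblockD j.
have [i0 [i0d Hr]] := rep_spec dD.
have i0R : i0 \in Rset by rewrite inE (Hr i0 i0d).
have : Aset (addf z0 c1) d \in W' c2 by rewrite -E; apply/imset2P; exists d z0.
case/imset2P => e k eD _ E2.
have [Ee Ei] := Aset_inj dD eD i0d E2.
move: Ei; rewrite !ffunE (eqP (N1 _ i0R)) (eqP (N2 _ i0R)) addo0 => Ek.
have Ek' : k = z0 by apply: (@addo_injk _ _ z0); rewrite -Ek addo0.
have [_] := Aset_inj dD eD jd E2. by rewrite !ffunE Ek' !addo0.
Qed.

Lemma card_Rset : #|Rset| = s.
Proof.
transitivity #|delta|; last exact: delta_cardD.
rewrite -(@card_in_imset _ _ (pblock delta) Rset).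
  suff -> : pblock delta @: Rset = delta by []. apply/setP => d; apply/imsetP/idP => [[j _ ->]|dD].
    exact: pblockD.
  have [i0 [i0d Hr]] := rep_spec dD.
  exists i0; first by rewrite inE Hr.
  by rewrite (def_pblock delta_triv dD i0d).
move=> j1 j2; rewrite !inE => /eqP E1 /eqP E2 Eb.
have [i0 [i0d Hr]] := rep_spec (pblockD j1).
rewrite -E1 -E2 (Hr j1 (mem_pblockD j1)) Hr // Eb. exact: mem_pblockD.
Qed.

Lemma card_Nset : #|Nset| = p ^ ((a - 1) * s).
Proof.
have -> : #|Nset| = #|pffun_on z0 (~: Rset) [set: 'I_p]|.
  apply: eq_card => c; rewrite inE; apply/forall_inP/pffun_onP => [H|[H _] j jR].
    split; last by move=> ? ?; rewrite inE.
    apply/subsetP => j; rewrite !inE; apply: contra => jR. by apply: H; rewrite inE.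
  apply/negPn/negP => cj. have := subsetP H j. move: jR; rewrite !inE => -> /(_ cj). done.
rewrite card_pffun_on cardsT card_ord.
have := cardsCs (~: Rset); rewrite setCK card_Rset card_ord => ->.
by rewrite mulnBl mul1n.
Qed.

End S.

Theorem lemma3p3 (p a s : nat) :
  prime p -> odd p -> 0 < a -> a < p ->
  forall delta : {set {set 'I_(a*s)}},
    is_set_partition s a delta ->
    #|[set w : {set {set 'I_(a*s*p)}} |
         [&& is_set_partition (s*p) a w, @fixed_by_R p a s w & @has_type p a s delta w]]|
    = p ^ ((a - 1) * s).
Proof.
move=> pr _ a0 _ delta Hd.
have p0 := prime_gt0 pr.
have -> : [set w : {set {set 'I_(a*s*p)}} |
         [&& is_set_partition (s*p) a w, @fixed_by_R p a s w & @has_type p a s delta w]]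
         = W p0 delta @: Nset p0 delta.
  apply/setP => w; rewrite inE; apply/idP/imsetP.
    case/and3P => _ _ /(@type_inv p a s p0 delta Hd w) [c ->].
    exists (nc p0 delta c); first exact: nc_N.
    by rewrite !WE (@W_nc p a s p0 delta a0 Hd).
  move=> [c _ ->]. have := (@good_W p a s p0 delta a0 Hd c). by rewrite andbA.
rewrite card_in_imset; first exact: (@card_Nset p a s p0 delta a0 Hd).
exact: (@W_injN p a s p0 delta a0 Hd).
Qed.
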